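(* There is an absolute constant $C>0$ such that for every $\varepsilon\in(0,1/3]$ and every integer $d\ge\log_2(1/\varepsilon)$, there exist an integer $k\le d$ and a monotone function $f:\{\pm1\}^k\to\{\pm1\}$ such that, for $\mathbf x$ uniform on $\{\pm1\}^k$, $$\min_{b\in\{\pm1\}}\Pr[f(\mathbf x)=b]\ge\varepsilon$$ and $$\mathbb E[\mathbf x_1f(\mathbf x)]=\cdots=\mathbb E[\mathbf x_kf(\mathbf x)]\le C\,\varepsilon\log(1/\varepsilon)\cdot\frac{\log d}{d}.$$
   Context: A function $f:\{\pm1\}^k\to\{\pm1\}$ is monotone if $f(x)\le f(y)$ whenever $x_i\le y_i$ for all $i$. *)

(* Defs.v *)
From HB Require Import structures.
From mathcomp Require Import all_boot all_order all_algebra.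
From mathcomp Require Import all_classical all_reals all_analysis.
Set Implicit Arguments. Unset Strict Implicit. Unset Printing Implicit Defensive.
Import Order.TTheory GRing.Theory Num.Theory.
Local Open Scope ring_scope.

(* The cube {±1}^k is encoded as {ffun 'I_k -> bool}, with true = +1 and
   false = -1; f : cube k -> bool encodes a {±1}-valued function. *)
Definition cube (k : nat) := {ffun 'I_k -> bool}.

Definition pm {R : ringType} (b : bool) : R := if b then 1 else -1.

Definition monotone_bf (k : nat) (f : cube k -> bool) : Prop :=
  forall x y : cube k, (forall i, x i ==> y i) -> f x ==> f y.

Definition prob_eq {R : realType} (k : nat) (f : cube k -> bool) (b : bool) : R :=
  #|[set x : cube k | f x == b]|%:R / 2 ^+ k.

Definition corr {R : realType} (k : nat) (f : cube k -> bool) (i : 'I_k) : R :=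
  (\sum_(x : cube k) pm (x i) * pm (f x)) / 2 ^+ k.

(* Main.v *)
Require Import Defs.
From HB Require Import structures.
From mathcomp Require Import all_boot all_order all_algebra.
From mathcomp Require Import all_classical all_reals all_analysis.
From mathcomp Require Import ring lra zify.
From Stdlib Require Import Lia.
Import Order.TTheory GRing.Theory Num.Theory.
Local Open Scope ring_scope.

Lemma card_fam (aT rT : finType) (F : aT -> pred rT) :
  #|[set f : {ffun aT -> rT} | f \in family F]| = (\prod_a #|F a|)%N.
Proof.
rewrite cardsE card_family foldrE big_map big_enum /=.
by [].
Qed.


Lemma sum_ind (R : realType) (X : finType) (P : pred X) :
  \sum_x ((P x)%:R : R) = #|[set x | P x]|%:R.
Proof.
rewrite -sum1_card natr_sum [RHS]big_mkcond /=; apply: eq_bigr => x _.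
by rewrite inE; case: (P x).
Qed.

Lemma sum_pm (R : realType) (X : finType) (g1 g2 : X -> bool) :
  \sum_x (pm (g1 x) * pm (g2 x) : R) =
  (#|[set x | g1 x == true]|%:R - #|[set x | g1 x == false]|%:R)
  - 2 * (#|[set x | (g1 x == true) && ~~ g2 x]|%:R - #|[set x | (g1 x == false) && ~~ g2 x]|%:R).
Proof.
transitivity (\sum_x ((((g1 x == true)%:R - (g1 x == false)%:R) -
   2 * (((g1 x == true) && ~~ g2 x)%:R - ((g1 x == false) && ~~ g2 x)%:R)) : R)).
  apply: eq_bigr => x _; rewrite /pm.
  case: (g1 x); case: (g2 x) => /=; rewrite ?mulr1 ?mulrN1 ?mul1r ?opprK; lra.
by rewrite sumrB -mulr_sumr !sumrB !sum_ind.
Qed.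

Section Tribes.
Variables m w : nat.
Notation T := {ffun 'I_w -> bool}.
Definition unpair (k : 'I_(m*w)) : 'I_m * 'I_w :=
  enum_val (cast_ord (esym (mxvec_cast m w)) k).
Lemma unpairK a b : unpair (mxvec_index a b) = (a,b).
Proof. by rewrite /unpair /mxvec_index cast_ordK enum_rankK. Qed.
Lemma pairK k : mxvec_index (unpair k).1 (unpair k).2 = k.
Proof. by case/mxvec_indexP: k => a b; rewrite unpairK. Qed.

Definition curry (x : cube (m*w)) : {ffun 'I_m -> T} :=
  [ffun a => [ffun b => x (mxvec_index a b)]].
Definition uncurry (Y : {ffun 'I_m -> T}) : cube (m*w) :=
  [ffun k => Y (unpair k).1 (unpair k).2].
Lemma curryK : cancel curry uncurry.
Proof. by move=> x; apply/ffunP=> k; rewrite !ffunE pairK. Qed.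
Lemma uncurryK : cancel uncurry curry.
Proof. by move=> Y; apply/ffunP=> a; apply/ffunP=> b; rewrite !ffunE unpairK. Qed.
Lemma card_curry (P : pred {ffun 'I_m -> T}) :
  #|[set x | P (curry x)]| = #|[set Y | P Y]|.
Proof.
have -> : [set x | P (curry x)] = curry @^-1: [set Y | P Y].
  by apply/setP => x; rewrite !inE.
apply: on_card_preimset; exists uncurry => ? _; [exact: curryK | exact: uncurryK].
Qed.
Lemma curryE (x : cube (m*w)) (i : 'I_(m*w)) : x i = curry x (unpair i).1 (unpair i).2.
Proof. by rewrite !ffunE pairK. Qed.

Definition tribes (x : cube (m*w)) : bool :=
  [exists a, [forall b, x (mxvec_index a b)]].
Definition allp : pred T := [pred z : T | [forall b, z b]].
Definition notall : pred T := [pred z : T | ~~ [forall b, z b]].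

Lemma tribes_curry x : ~~ tribes x = (curry x \in family (fun _ => notall)).
Proof.
rewrite negb_exists; apply/forallP/familyP => H a; have := H a;
  rewrite ffunE inE /=;
  suff -> : [forall b, [ffun b0 => x (mxvec_index a b0)] b] = [forall b, x (mxvec_index a b)] by [];
  by apply: eq_forallb => b; rewrite ffunE.
Qed.

Lemma tribes_mono : monotone_bf tribes.
Proof.
move=> x y H; apply/implyP => /existsP [a /forallP Ha]; apply/existsP; exists a.
by apply/forallP => b; move: (H (mxvec_index a b)) => /implyP; apply; apply: Ha.
Qed.

Lemma card_allp : #|allp| = 1%N.
Proof.
transitivity #|pred1 ([ffun=> true] : T)|; last exact: card1.
apply: eq_card => z; rewrite !inE /=.
apply/forallP/eqP => [H|-> b]; last by rewrite ffunE.
by apply/ffunP => b; rewrite ffunE; exact: H.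
Qed.

Lemma card_notall : (#|notall| + 1 = 2^w)%N.
Proof.
have := cardC allp; rewrite card_allp card_ffun card_bool card_ord addnC => <-.
by congr (_ + _)%N; apply: eq_card => z; rewrite !inE.
Qed.

Lemma card_b0 (b0 : 'I_w) c :
  #|[pred z : T | z b0 == c]| = (\prod_(b : 'I_w) (if b == b0 then 1 else 2))%N.
Proof.
have -> : #|[pred z : T | z b0 == c]| =
  #|[set f : T | f \in family (fun b => if b == b0 then pred1 c else predT)]|.
  apply: eq_card => z; rewrite !inE; apply/eqP/familyP => [Hz b | H].
    by case: eqP => [->|_]; rewrite inE ?Hz.
  by have := H b0; rewrite eqxx inE => /eqP.
rewrite card_fam; apply: eq_bigr => b _; case: eqP => _; first by rewrite card1.
by rewrite -card_bool; apply: eq_card.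
Qed.

Lemma card_blk_f b0 :
  #|[pred z : T | (z b0 == false) && (z \in notall)]| = #|[pred z : T | z b0 == false]|.
Proof.
apply: eq_card => z; rewrite !inE; case: eqP => //= Hz.
by apply/negP => /forallP/(_ b0); rewrite Hz.
Qed.

Lemma card_blk_t b0 :
  (#|[pred z : T | (z b0 == true) && (z \in notall)]| + 1 = #|[pred z : T | z b0 == true]|)%N.
Proof.
rewrite -(cardID allp [pred z : T | z b0 == true]) addnC; congr (_ + _)%N.
  rewrite -card_allp; apply: eq_card => z; rewrite !inE /=.
  by case: (boolP [forall b, z b]) => [/forallP ->|]; rewrite ?andbF.
by apply: eq_card => z; rewrite !inE /= andbC.
Qed.

Section Index.
Variable i : 'I_(m*w).
Let a0 := (unpair i).1.
Let b0 := (unpair i).2.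

Lemma card_Hi c : #|[set x : cube (m*w) | x i == c]| =
  (\prod_(a : 'I_m) (if a == a0 then \prod_(b : 'I_w) (if b == b0 then 1 else 2) else 2^w))%N.
Proof.
have -> : [set x : cube (m*w) | x i == c] = [set x | curry x \in
   family (fun a => if a == a0 then [pred z : T | z b0 == c] else predT)].
  apply/setP => x; rewrite !inE curryE -/a0 -/b0; apply/eqP/familyP => [Hz a | H].
    by case: eqP => [->|_]; rewrite inE ?Hz.
  by have := H a0; rewrite eqxx inE => /eqP.
rewrite (card_curry (fun Y => Y \in family (fun a => if a == a0 then [pred z : T | z b0 == c] else predT))).
rewrite card_fam; apply: eq_bigr => a _.
case: eqP => _; first exact: card_b0.
transitivity #|{: T}|; first by apply: eq_card.
by rewrite card_ffun card_bool card_ord.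
Qed.

Lemma card_Ai c : #|[set x : cube (m*w) | (x i == c) && ~~ tribes x]| =
  (#|[pred z : T | (z b0 == c) && (z \in notall)]| * #|notall| ^ m.-1)%N.
Proof.
have -> : [set x : cube (m*w) | (x i == c) && ~~ tribes x] = [set x | curry x \in
   family (fun a => if a == a0 then [pred z : T | (z b0 == c) && (z \in notall)] else [pred z : T | z \in notall])].
  apply/setP => x; rewrite !inE tribes_curry curryE -/a0 -/b0.
  apply/andP/familyP => [[/eqP Hc /familyP Hn] a | H].
    by case: eqP => [->|_]; rewrite ?inE ?Hc ?eqxx /=; apply: Hn.
  have := H a0; rewrite eqxx inE => /andP [-> _]; split => //.
  by apply/familyP => a; have := H a; case: eqP => [->|_] //; rewrite inE => /andP [].
rewrite (card_curry (fun Y => Y \in family (fun a => if a == a0 then [pred z : T | (z b0 == c) && (z \in notall)] else [pred z : T | z \in notall]))).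
rewrite card_fam (bigD1 a0) //= eqxx; congr (_ * _)%N.
rewrite (eq_bigr (fun _ => #|notall|)); last by move=> a /negbTE ->.
by rewrite prod_nat_const cardC1 card_ord.
Qed.

Lemma corr_tribes (R : realType) :
  corr (R:=R) tribes i = 2 * (#|notall| ^ m.-1)%:R / 2 ^+ (m*w).
Proof.
rewrite /corr sum_pm !card_Ai -/b0 (card_Hi true) (card_Hi false) subrr sub0r.
have Hf : #|[pred z : T | (z b0 == false) && (z \in notall)]| =
   (#|[pred z : T | (z b0 == true) && (z \in notall)]| + 1)%N.
  by rewrite card_blk_f card_b0 -(card_b0 b0 true) card_blk_t.
rewrite Hf !natrM natrD; congr (_ / _); ring.
Qed.
End Index.

Lemma probF (R : realType) :
  prob_eq (R:=R) tribes false = (#|notall|%:R / 2 ^+ w) ^+ m.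
Proof.
rewrite /prob_eq.
have -> : #|[set x : cube (m*w) | tribes x == false]| = (#|notall| ^ m)%N.
  transitivity #|[set x | curry x \in family (fun _ : 'I_m => notall)]|.
    by apply: eq_card => x; rewrite inE [in RHS]inE -tribes_curry; case: (tribes x).
  rewrite (card_curry (fun Y => Y \in family (fun _ : 'I_m => notall))) card_fam.
  by rewrite prod_nat_const card_ord.
by rewrite natrX expr_div_n mulnC exprM.
Qed.

Lemma probT (R : realType) :
  prob_eq (R:=R) tribes true = 1 - prob_eq (R:=R) tribes false.
Proof.
rewrite /prob_eq.
have : (#|[set x : cube (m*w) | tribes x == true]| +
        #|[set x : cube (m*w) | tribes x == false]| = 2^(m*w))%N.
  transitivity #|{: cube (m*w)}|; last by rewrite card_ffun card_bool card_ord.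
  rewrite -(cardsC [set x : cube (m*w) | tribes x == true]).
  congr (_ + _)%N; apply: eq_card => x; rewrite !inE; by case: (tribes x).
move=> /(congr1 (fun n => n%:R : R)); rewrite natrD natrX => H.
have H2 : (2:R) ^+ (m*w) != 0 by rewrite expf_neq0 // pnatr_eq0.
have -> : (#|[set x : cube (m*w) | tribes x == true]|%:R : R) =
   2 ^+ (m*w) - #|[set x : cube (m*w) | tribes x == false]|%:R by rewrite -H addrK.
by rewrite mulrBl divff.
Qed.
End Tribes.

Lemma down_le (P : pred nat) : (forall n, P n.+1 -> P n) ->
  forall n k, (k <= n)%N -> P n -> P k.
Proof.
move=> down; elim=> [|n IH] k; first by rewrite leqn0 => /eqP ->.
rewrite leq_eqVlt => /orP [/eqP -> //| hk Pn]; apply: IH => //; exact: down.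
Qed.

Lemma ex_max (P : pred nat) a b : (forall n, P n.+1 -> P n) -> P a -> ~~ P b ->
  exists n, (a <= n)%N /\ P n /\ ~~ P n.+1.
Proof.
move=> down Pa; elim: b => [|b IH] Pb.
  by have := @down_le P down _ _ (leq0n a) Pa; rewrite (negbTE Pb).
case: (boolP (P b)) => Hb; last exact: IH.
exists b; split => //; case: (leqP a b) => // h.
by have := @down_le P down _ _ h Pa; rewrite (negbTE Pb).
Qed.

Lemma bern_lo (R : realType) (x : R) n : 0 <= x <= 1 -> 1 - n%:R * x <= (1 - x) ^+ n.
Proof.
move=> /andP [x0 x1]; elim: n => [|n IH]; first by rewrite mul0r subr0 expr0.
rewrite exprS -natr1.
have h : 0 <= (1 - x) * ((1 - x) ^+ n - (1 - n%:R * x)).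
  by apply: mulr_ge0; lra.
have h2 : 0 <= n%:R * x * x by apply: mulr_ge0 => //; apply: mulr_ge0.
nra.
Qed.

Lemma bern_hi (R : realType) (x : R) n : 0 <= x <= 1 -> (1 - x) ^+ n * (1 + n%:R * x) <= 1.
Proof.
move=> /andP [x0 x1]; elim: n => [|n IH]; first by rewrite mul0r addr0 expr0 mulr1.
rewrite exprS -natr1.
have hp : 0 <= (1 - x) ^+ n by apply: exprn_ge0; lra.
have h : (1 - x) * (1 + (n%:R + 1) * x) <= 1 + n%:R * x.
  have : 0 <= (n%:R + 1) * x * x by apply: mulr_ge0 => //; apply: mulr_ge0 => //; lra.
  nra.
have := ler_wpM2l hp h; nra.
Qed.

Lemma ln_le (R : realType) (a b : R) : 0 < a -> a <= b -> ln a <= ln b.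
Proof. by move=> a0 ab; rewrite ler_ln ?posrE //; apply: lt_le_trans ab. Qed.

Lemma leq_expw (a b e : nat) : (a <= b)%N -> (a ^ e <= b ^ e)%N.
Proof. by move=> ab; elim: e => // e IH; rewrite !expnS leq_mul. Qed.

Theorem proposition4p5 (R : realType) :
  exists C : R, 0 < C /\
  forall (eps : R), 0 < eps -> eps <= 3^-1 ->
  forall d : nat, ln (eps^-1) / ln 2 <= d%:R ->
  exists k : nat, (k <= d)%N /\
  exists f : cube k -> bool,
    monotone_bf f /\
    (forall b : bool, eps <= prob_eq f b) /\
    (forall i j : 'I_k, corr (R:=R) f i = corr (R:=R) f j) /\
    (forall i : 'I_k, corr f i <= C * eps * ln (eps^-1) * (ln d%:R / d%:R)).
Proof.
set l2 := ln (2:R).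
have l2_gt0 : 0 < l2 by apply: ln_gt0; lra.
have l2sq : 0 < l2 ^+ 2 by apply: exprn_gt0.
exists (36 / l2 ^+ 2); split; first by apply: divr_gt0 => //; lra.
move=> eps e0 e3 d Hd.
have e3' : 3 * eps <= 1 by have := e3; rewrite -[X in _ <= X]div1r ler_pdivlMr //=; lra.
have ee : eps * eps^-1 = 1 by rewrite mulfV // gt_eqF.
have ie0 : 0 < eps^-1 by rewrite invr_gt0.
have ieps : 3 <= eps^-1 by nra.
have Hd2 : eps^-1 <= 2 ^+ d.
  have : ln (eps^-1) <= ln (2 ^+ d).
    have -> : ln ((2:R) ^+ d) = d%:R * l2 by rewrite lnXn // mulr_natl.
    by rewrite -ler_pdivrMr.
  by rewrite ler_ln // posrE // exprn_gt0.

have d2 : (2 <= d)%N.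
  have h3 : (3 <= 2 ^ d)%N by rewrite -(ler_nat R) natrX; lra.
  by move: h3; case: (d) => [|[|?]].
have [s [s1 [Ps nPs]]] : exists s, (1 <= s)%N /\ (3 * eps * 2 ^+ s <= 2) /\
    ~~ (3 * eps * 2 ^+ s.+1 <= 2).
  apply: (@ex_max (fun n => 3 * eps * 2 ^+ n <= 2) 1 d) => /=.
  - move=> n; rewrite exprS => h.
    have : 0 <= 3 * eps * 2 ^+ n by apply: mulr_ge0; [lra | apply: exprn_ge0].
    nra.
  - by rewrite expr1; lra.
  - by rewrite -ltNge; nra.
set u : R := 2 ^+ s.
have Psu : 3 * eps * u <= 2 := Ps.
have u2 : 2 <= u.
  rewrite /u; case: (s) s1 => // s' _; rewrite exprS.
  have : 1 <= (2:R) ^+ s' by apply: (exprn_egte1 R).1; lra.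
  lra.
move: nPs; rewrite exprS -ltNge -/u => nPs.
have ue' : u < eps^-1.
  rewrite -(ltr_pM2l e0) ee; lra.
have ue : u <= eps^-1 by apply: ltW.
have sd : (s < d)%N.
  rewrite -(ltn_exp2l _ _ (isT : (1 < 2)%N)) -(ltr_nat R) !natrX.
  by apply: lt_le_trans Hd2.
have [j [_ [Qj nQj]]] : exists j, (0 <= j)%N /\ (2 ^ j * (j + s) <= d)%N /\
    ~~ (2 ^ j.+1 * (j.+1 + s) <= d)%N.
  apply: (@ex_max (fun n => 2 ^ n * (n + s) <= d)%N 0 d) => /=.
  - move=> n h; apply: leq_trans h; apply: leq_mul.
      by rewrite leq_exp2l.
    by rewrite addSn.
  - by rewrite expn0 mul1n add0n ltnW.
  - rewrite -ltnNge; apply: leq_trans (ltn_expl d (isT : (1 < 2)%N)) _.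
    by apply: leq_pmulr; rewrite addn_gt0 s1 orbT.
move: nQj; rewrite -ltnNge => nQj.
set m := (2 ^ j)%N.
set w := (j + s)%N.
exists (m * w)%N; split => //.
exists (tribes m w); split; first exact: tribes_mono.
have Hn : (#|notall w|%:R : R) = 2 ^+ w - 1.
  have := card_notall w; move/(congr1 (fun n => n%:R : R)).
  by rewrite natrD natrX => <-; rewrite addrK.
set J : R := 2 ^+ j.
have J1 : 1 <= J by apply: (exprn_egte1 R).1; lra.
have Ew : (2 : R) ^+ w = J * u by rewrite exprD.
have mR : (m%:R : R) = J by rewrite natrX.
set p : R := (2 ^+ w)^-1.
have mp : m%:R * p = u^-1 by rewrite mR /p Ew invfM mulrA mulfV ?mul1r // gt_eqF //; lra.
have Ju : 2 <= J * u by nra.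
have p01 : 0 <= p <= 1.
  rewrite /p Ew invr_ge0; apply/andP; split; first by lra.
  by rewrite invf_le1; lra.
have qE : (#|notall w|%:R / 2 ^+ w : R) = 1 - p.
  have w0 : (2:R) ^+ w != 0 by rewrite Ew gt_eqF //; lra.
  by rewrite Hn mulrBl divff // mul1r.
have tu : u^-1 * u = 1 by rewrite mulVf // gt_eqF //; lra.
have t0 : 0 < u^-1 by rewrite invr_gt0; lra.
split.
  have hlo := @bern_lo R p m p01.
  have hhi := @bern_hi R p m p01.
  rewrite mp in hlo hhi.
  have Q0 : 0 <= (1 - p) ^+ m by apply: exprn_ge0; lra.
  case; rewrite ?probT probF qE.
    have h1 : 3 * eps <= 2 * u^-1 by nra.
    have h2 : 0 <= (u^-1 - 3 / 2 * eps) * (1 - eps) by apply: mulr_ge0; lra.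
    nra.
  have : u^-1 <= 2^-1 by rewrite lef_pV2 ?posrE //; lra.
  lra.
split; first by move=> a b; rewrite !corr_tribes.
move=> i; rewrite corr_tribes.
have m0 : (0 < m)%N by rewrite expn_gt0.
have Nle : (#|notall w| ^ m.-1 <= (2 ^ w) ^ m.-1)%N.
  by apply: leq_expw; rewrite -(card_notall w) leq_addr.
have E : (2:R) ^+ (m * w) = J * u * (2 ^+ w) ^+ m.-1.
  by rewrite -Ew mulnC exprM -{1}(prednK m0) exprS.
set Y : R := (2 ^+ w) ^+ m.-1.
have Y0 : 0 < Y by apply: exprn_gt0; rewrite Ew; lra.
set X : R := (#|notall w| ^ m.-1)%:R.
have XY : X <= Y by rewrite /X /Y -natrX -natrX ler_nat.
have Ju0 : 0 < J * u by lra.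
have step1 : 2 * X / (J * u * Y) <= 2 / (J * u).
  rewrite ler_pdivrMr; last by apply: mulr_gt0.
  have -> : 2 / (J * u) * (J * u * Y) = 2 * Y by field; apply/andP; split; apply/negP => /eqP; lra.
  lra.
rewrite E; apply: le_trans step1 _.
set dR : R := d%:R.
have dR2 : 2 <= dR by rewrite /dR (ler_nat R 2 d).
set ld := ln dR.
set L := ln (eps^-1).
have hld : l2 <= ld by apply: ln_le; lra.
have hL : l2 <= L by apply: ln_le; lra.
have JdR : J <= dR.
  rewrite /J /dR -natrX ler_nat; apply: leq_trans Qj; apply: leq_pmulr.
  by rewrite addn_gt0 s1 orbT.
have hj : j%:R * l2 <= ld.
  have -> : j%:R * l2 = ln J by rewrite /J lnXn // mulr_natl.
  by apply: ln_le; lra.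
have hs : s%:R * l2 <= L.
  have -> : s%:R * l2 = ln u by rewrite /u lnXn // mulr_natl.
  by apply: ln_le; lra.
have dlt : dR < 2 * J * (j%:R + 1 + s%:R).
  have : (d%:R : R) < (2 ^ j.+1 * (j.+1 + s))%:R by rewrite ltr_nat.
  have -> : ((2 ^ j.+1 * (j.+1 + s))%:R : R) = 2 * J * (j%:R + 1 + s%:R).
    by rewrite /J natrM natrX exprS natrD -natr1; ring.
  by [].
have j0 : 0 <= (j%:R : R) by [].
have s0 : 0 <= (s%:R : R) by [].
have key : 12 * (j%:R + 1 + s%:R) * l2 ^+ 2 <= 36 * L * ld.
  rewrite expr2.
  have h1 : j%:R * l2 * l2 <= ld * L by nra.
  have h2 : l2 * l2 <= L * ld by nra.
  have h3 : s%:R * l2 * l2 <= L * ld by nra.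
  nra.
have dR0 : 0 < dR by lra.
rewrite ler_pdivrMr //.
have -> : 36 / l2 ^+ 2 * eps * L * (ld / dR) * (J * u) =
    (36 * L * ld) * (eps * u * J) / (l2 ^+ 2 * dR).
  by field; apply/andP; split; apply/negP => /eqP; lra.
rewrite ler_pdivlMr; last exact: mulr_gt0.
have euJ : 0 <= eps * u * J by apply: mulr_ge0; [apply: mulr_ge0|]; lra.
have a1 : 2 * (l2 ^+ 2 * dR) <= (6 * eps * u) * (l2 ^+ 2 * dR).
  by apply: ler_wpM2r; [apply: mulr_ge0; lra | lra].
have a2 : (6 * eps * u) * (l2 ^+ 2 * dR) <= (6 * eps * u) * (l2 ^+ 2 * (2 * J * (j%:R + 1 + s%:R))).
  apply: ler_wpM2l; first by apply: mulr_ge0; [apply: mulr_ge0|]; lra.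
  by apply: ler_wpM2l; lra.
have a3 : (eps * u * J) * (12 * (j%:R + 1 + s%:R) * l2 ^+ 2) <= (eps * u * J) * (36 * L * ld).
  by apply: ler_wpM2l.
have a4 : (6 * eps * u) * (l2 ^+ 2 * (2 * J * (j%:R + 1 + s%:R))) = (eps * u * J) * (12 * (j%:R + 1 + s%:R) * l2 ^+ 2) by ring.
have a5 : (36 * L * ld) * (eps * u * J) = (eps * u * J) * (36 * L * ld) by ring.
lra.
Qed.
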